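(* Let $b>0$, $p_0>0$, $\alpha\in(1,2)$, and let $(p_\ell)_{\ell\ge1}$ be a probability distribution on $\{1,2,\dots\}$ with $p_\ell\sim p_0\ell^{-(1+\alpha)}$ as $\ell\to\infty$. Let $k,j\in\mathbb N$ with $k\ge j\ge2$ and let $c_0>0$. For $K\ge1$ and $n\ge c_0/2$ define \[R_j(K,n)=K^\alpha nb\sum_{\ell\ge j-1}p_\ell\,\frac{\binom{Kn+\ell-k}{\ell+1-j}}{\binom{Kn+\ell}{\ell+1}},\qquad R_j(n)=\frac{p_0b}{n^{\alpha-1}}\int_0^1u^j(1-u)^{k-j}\frac{u^{1-\alpha}(1-u)^{\alpha-1}}{u^2}\,du.\] Then $R_j(K,n)\to R_j(n)$ as $K\to\infty$, uniformly in $n\ge c_0/2$.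
   Context: Binomial coefficients with non-integer upper argument are understood in the generalized sense $\binom{x}{r}=\frac{x(x-1)\cdots(x-r+1)}{r!}$ (equivalently via Gamma functions), for real $x$ and nonnegative integer $r$. *)

(* Defs.v *)
From Stdlib Require Import Reals Lra Factorial.
From Coquelicot Require Import Coquelicot.
Open Scope R_scope.

Fixpoint falling (x : R) (r : nat) : R :=
  match r with
  | O => 1
  | S r' => falling x r' * (x - INR r')
  end.

Definition gbinom (x : R) (r : nat) : R := falling x r / INR (fact r).

Definition RjKn (p : nat -> R) (alpha b : R) (k j : nat) (K n : R) : R :=
  Rpower K alpha * n * b *
  Series (fun m : nat =>
    let l := (m + (j - 1))%nat in
    p l * (gbinom (K * n + INR l - INR k) (l + 1 - j)
           / gbinom (K * n + INR l) (l + 1))).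

Definition Rj_integrand (alpha : R) (k j : nat) (u : R) : R :=
  u ^ j * (1 - u) ^ (k - j) *
  (Rpower u (1 - alpha) * Rpower (1 - u) (alpha - 1) / u ^ 2).

(* Main.v *)
Require Import Defs.
From Stdlib Require Import Reals Lra Lia Factorial.
From Coquelicot Require Import Coquelicot.
Open Scope R_scope.


Definition near1 (r t : R) := Rabs (r - 1) <= t.

Lemma near1_iff r t : near1 r t <-> 1 - t <= r <= 1 + t.
Proof. unfold near1. rewrite Rabs_le_between'. lra. Qed.

Lemma near1_mul r s t t' : near1 r t -> near1 s t' -> t <= 1 -> near1 (r*s) (t + 2*t').
Proof.
  rewrite !near1_iff. intros [H1 H2] [H3 H4] Ht.
  assert (0 <= t') by lra. split; nra.
Qed.

Lemma near1_inv r t : near1 r t -> t <= 1/2 -> near1 (/r) (2*t).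
Proof.
  rewrite !near1_iff. intros [H1 H2] Ht.
  assert (Hr : 0 < r) by lra. assert (0 <= t) by lra.
  split.
  - apply (Rmult_le_reg_r r); auto. rewrite Rinv_l by lra. nra.
  - apply (Rmult_le_reg_r r); auto. rewrite Rinv_l by lra. nra.
Qed.

Lemma near1_weak r t t' : near1 r t -> t <= t' -> near1 r t'.
Proof. unfold near1; lra. Qed.

Lemma exp_near t : Rabs t <= 1/2 -> near1 (exp t) (2 * Rabs t).
Proof.
  intros Ht. rewrite near1_iff. rewrite Rabs_le_between in Ht.
  pose proof (exp_ineq1_le t). pose proof (exp_ineq1_le (-t)).
  split.
  - destruct (Rle_dec 0 t). rewrite Rabs_right by lra. lra.
    rewrite Rabs_left by lra. lra.
  - assert (exp t * exp (-t) = 1) by (rewrite <- exp_plus; replace (t + -t) with 0 by ring; apply exp_0).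
    pose proof (exp_pos t). pose proof (exp_pos (-t)).
    destruct (Rle_dec 0 t).
    + rewrite Rabs_right by lra. nra.
    + rewrite Rabs_left by lra. nra.
Qed.

Lemma ln_near r eta : Rabs (r - 1) <= eta -> eta <= 1/2 -> Rabs (ln r) <= 2 * eta.
Proof.
  intros H He. rewrite Rabs_le_between' in H. assert (Hr: 0 < r) by lra.
  apply Rabs_le.
  pose proof (exp_ineq1_le (r - 1)).
  pose proof (exp_ineq1_le (/r - 1)).
  assert (A: ln r <= r - 1).
  { rewrite <- (ln_exp (r - 1)). apply ln_le; lra. }
  assert (B: ln (/r) <= /r - 1).
  { rewrite <- (ln_exp (/r - 1)). apply ln_le. apply Rinv_0_lt_compat; lra. lra. }
  rewrite ln_Rinv in B by lra.
  assert (/ r <= 1 + 2*eta).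
  { apply (Rmult_le_reg_r r); auto. rewrite Rinv_l by lra. nra. }
  split; lra.
Qed.

Lemma rp_near r g eta : Rabs (r - 1) <= eta -> eta <= 1/2 -> 4 * Rabs g * eta <= 1 ->
  near1 (Rpower r g) (4 * Rabs g * eta).
Proof.
  intros H He Hg. unfold Rpower.
  pose proof (ln_near r eta H He).
  assert (Rabs (g * ln r) <= 2 * Rabs g * eta).
  { rewrite Rabs_mult. pose proof (Rabs_pos g). nra. }
  eapply near1_weak. apply exp_near. lra. lra.
Qed.

Lemma falling_split y r s : falling y (r + s) = falling y r * falling (y - INR r) s.
Proof.
  induction s as [|s IH].
  - rewrite Nat.add_0_r. simpl. ring.
  - rewrite Nat.add_succ_r. simpl. rewrite IH. rewrite plus_INR. ring.
Qed.

Lemma fact_falling m j : INR (fact (m + j)) = INR (fact m) * falling (INR (m + j)) j.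
Proof.
  revert m. induction j as [|j IH]; intro m; simpl.
  - rewrite Nat.add_0_r. ring.
  - replace (m + S j)%nat with (S m + j)%nat by lia.
    rewrite IH. rewrite fact_simpl. rewrite mult_INR.
    replace (INR (S m + j) - INR j) with (INR (S m)).
    2:{ rewrite plus_INR. ring. }
    ring.
Qed.

Lemma falling_bounds y r : INR r - 1 <= y ->
  0 <= (y - INR r + 1) ^ r <= falling y r /\ falling y r <= y ^ r.
Proof.
  induction r as [|r IH]; intros Hy.
  - simpl. lra.
  - cbn [falling pow]. rewrite S_INR in Hy |- *. pose proof (pos_INR r).
    destruct IH as [[H0 H1] H2]. lra.
    assert (0 <= y - INR r) by lra.
    split; [split|].
    + apply Rmult_le_pos. lra. apply pow_le. lra.
    + replace (y - (INR r + 1) + 1) with (y - INR r) by ring.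
      rewrite Rmult_comm. apply Rmult_le_compat_r. lra.
      apply Rle_trans with ((y - INR r + 1) ^ r); auto.
      apply pow_incr. lra.
    + rewrite (Rmult_comm y). apply Rmult_le_compat; try lra.
Qed.

Lemma falling_pos y r : INR r - 1 < y -> 0 < falling y r.
Proof.
  induction r as [|r IH]; intros Hy. simpl; lra.
  cbn [falling]. rewrite S_INR in Hy. pose proof (pos_INR r).
  apply Rmult_lt_0_compat. apply IH; lra. lra.
Qed.

Lemma INR_fact_pos n : 0 < INR (fact n).
Proof. apply lt_0_INR. apply lt_O_fact. Qed.

Lemma T_repr (x : R) (k j l : nat) : (j <= k)%nat -> (k <= l + 1)%nat -> 0 < x ->
  gbinom (x + INR l - INR k) (l + 1 - j) / gbinom (x + INR l) (l + 1)
  = falling (x - 1) (k - j) * falling (INR (l + 1)) j / falling (x + INR l) k.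
Proof.
  intros Hjk Hkl Hx.
  set (r := (l + 1 - k)%nat).
  assert (E1 : (l + 1 = k + r)%nat) by (unfold r; lia).
  assert (E2 : (l + 1 - j = r + (k - j))%nat) by (unfold r; lia).
  assert (Er : INR r = INR l + 1 - INR k).
  { unfold r. rewrite minus_INR by lia. rewrite plus_INR. simpl. ring. }
  unfold gbinom. rewrite E2. rewrite E1 at 1. rewrite !falling_split.
  replace (x + INR l - INR k - INR r) with (x - 1) by (rewrite Er; ring).
  replace (x + INR l - INR k) with (x + INR l - INR k) by ring.
  assert (Ef : INR (fact (l + 1)) = INR (fact (l + 1 - j)) * falling (INR (l+1)) j).
  { replace (l + 1)%nat with ((l + 1 - j) + j)%nat at 1 by lia.
    rewrite fact_falling. f_equal. f_equal. f_equal. lia. }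
  rewrite <- E2. rewrite Ef.
  assert (P1 : 0 < falling (x + INR l) k).
  { apply falling_pos. pose proof (pos_INR l). assert (INR k <= INR l + 1).
    { replace 1 with (INR 1) by reflexivity. rewrite <- plus_INR. apply le_INR. lia. }
    lra. }
  assert (P2 : 0 < falling (x + INR l - INR k) r).
  { apply falling_pos. rewrite Er. lra. }
  pose proof (INR_fact_pos (l + 1 - j)).
  replace (x + INR l - INR (k)) with (x + INR l - INR k) by ring.
  assert (P3 : 0 < falling (INR (l + 1)) j).
  { apply falling_pos. assert (INR j <= INR (l+1)) by (apply le_INR; lia). lra. }
  field. repeat split; try lra.
Qed.

Lemma Rpower_1_l y : Rpower 1 y = 1.
Proof. unfold Rpower. rewrite ln_1, Rmult_0_r. apply exp_0. Qed.

Lemma h_form alpha k j u : (j <= k)%nat -> 0 < u < 1 ->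
  Rj_integrand alpha k j u =
  Rpower u (INR j - 1 - alpha) * Rpower (1 - u) (INR k - INR j + alpha - 1).
Proof.
  intros Hjk Hu. unfold Rj_integrand.
  rewrite <- (Rpower_pow j u), <- (Rpower_pow (k - j) (1 - u)), <- (Rpower_pow 2 u) by lra.
  unfold Rpower. unfold Rdiv. rewrite <- exp_Ropp. rewrite <- !exp_plus.
  f_equal. rewrite minus_INR by lia. simpl INR. ring.
Qed.

Lemma h_cont alpha k j z : 0 < z < 1 -> continuous (Rj_integrand alpha k j) z.
Proof.
  intros Hz. apply (ex_derive_continuous (K:=R_AbsRing) (V:=R_NormedModule)). unfold Rj_integrand, Rpower.
  auto_derive. repeat split; try lra. nra.
Qed.

Lemma h_nonneg alpha k j u : 0 < u < 1 -> 0 <= Rj_integrand alpha k j u.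
Proof.
  intros Hu. unfold Rj_integrand. apply Rmult_le_pos. apply Rmult_le_pos; apply pow_le; lra.
  unfold Rdiv. apply Rmult_le_pos. apply Rmult_le_pos; unfold Rpower; left; apply exp_pos.
  left. apply Rinv_0_lt_compat. apply pow_lt; lra.
Qed.

Lemma h_le alpha k j u : (j <= k)%nat -> 1 < alpha -> 0 < u < 1 ->
  Rj_integrand alpha k j u <= Rpower u (INR j - 1 - alpha).
Proof.
  intros Hjk Ha Hu. rewrite h_form by auto.
  assert (Rpower (1 - u) (INR k - INR j + alpha - 1) <= 1).
  { apply Rle_trans with (Rpower 1 (INR k - INR j + alpha - 1)); [|rewrite Rpower_1_l; lra].
    apply Rle_Rpower_l. assert (INR j <= INR k) by (apply le_INR; lia). lra. lra. }
  assert (0 < Rpower u (INR j - 1 - alpha)) by (unfold Rpower; apply exp_pos).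
  assert (0 <= Rpower (1 - u) (INR k - INR j + alpha - 1)) by (unfold Rpower; left; apply exp_pos).
  nra.
Qed.

Section Integral.
Variables (alpha : R) (k j : nat).
Hypothesis Ha : 1 < alpha < 2.
Hypothesis Hj : (2 <= j)%nat.
Hypothesis Hjk : (j <= k)%nat.

Let h := Rj_integrand alpha k j.
Let a := INR j - alpha.
Let G u := Rpower u a / a.

Lemma a_pos : 0 < a.
Proof. unfold a. assert (2 <= INR j) by (replace 2 with (INR 2) by reflexivity; apply le_INR; lia). lra. Qed.

Lemma G_int v w : 0 < v <= w ->
  is_RInt (fun u => Rpower u (INR j - 1 - alpha)) v w (G w - G v).
Proof.
  intros Hv. pose proof a_pos.
  apply (is_RInt_derive G (fun u => Rpower u (INR j - 1 - alpha))).
  - intros x Hx. rewrite Rmin_left in Hx by lra. rewrite Rmax_right in Hx by lra.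
    unfold G, Rpower. auto_derive. lra.
    replace ((INR j - 1 - alpha) * ln x) with (a * ln x + - ln x) by (unfold a; ring).
    rewrite exp_plus. rewrite exp_Ropp, exp_ln by lra. field. split; lra.
  - intros x Hx. rewrite Rmin_left in Hx by lra.
    apply (ex_derive_continuous (K:=R_AbsRing) (V:=R_NormedModule)).
    unfold Rpower. auto_derive. lra.
Qed.

Lemma h_exRInt v w : 0 < v < 1 -> 0 < w < 1 -> ex_RInt h v w.
Proof.
  intros Hv Hw. apply (ex_RInt_continuous (V:=R_CompleteNormedModule)). intros z Hz. apply h_cont.
  destruct (Rle_dec v w).
  - rewrite Rmin_left in Hz by lra. rewrite Rmax_right in Hz by lra. lra.
  - rewrite Rmin_right in Hz by lra. rewrite Rmax_left in Hz by lra. lra.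
Qed.

Lemma h_RInt_bound v w : 0 < v <= w -> w < 1 -> 0 <= RInt h v w <= G w - G v.
Proof.
  intros Hv Hw. split.
  - apply RInt_ge_0. lra. apply h_exRInt; lra. intros; apply h_nonneg; lra.
  - rewrite <- (is_RInt_unique _ _ _ _ (G_int v w Hv)).
    apply RInt_le. lra. apply h_exRInt; lra. eexists; apply G_int; lra.
    intros x Hx. apply h_le; auto. lra. lra.
Qed.

Lemma G_mono v w : 0 < v <= w -> G v <= G w.
Proof.
  intros. pose proof a_pos. unfold G. unfold Rdiv. apply Rmult_le_compat_r.
  left; apply Rinv_0_lt_compat; lra. apply Rle_Rpower_l; lra.
Qed.

Lemma G_pos v : 0 < v -> 0 < G v.
Proof. intros. pose proof a_pos. unfold G, Rpower. apply Rdiv_lt_0_compat; auto. apply exp_pos. Qed.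

Lemma h_RInt_abs0 v w : 0 < v < 1 -> 0 < w < 1 -> Rabs (RInt h v w) <= Rmax (G v) (G w).
Proof.
  intros Hv Hw. pose proof (G_pos v) as Gv. pose proof (G_pos w) as Gw.
  destruct (Rle_dec v w).
  - destruct (h_RInt_bound v w) as [A B]; try lra.
    rewrite Rabs_right by lra. apply Rle_trans with (G w). lra. apply Rmax_r.
  - destruct (h_RInt_bound w v) as [A B]; try lra.
    rewrite <- opp_RInt_swap by (apply h_exRInt; lra).
    change (Rabs (- RInt h w v) <= Rmax (G v) (G w)).
    rewrite Rabs_Ropp. rewrite Rabs_right by lra. apply Rle_trans with (G v). lra. apply Rmax_l.
Qed.

Lemma rp_bound_half u c : 1/2 <= u <= 1 -> Rpower u c <= Rpower (1/2) c + 1.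
Proof.
  intros Hu. assert (0 < Rpower (1/2) c) by (unfold Rpower; apply exp_pos).
  destruct (Rle_dec 0 c).
  - apply Rle_trans with (Rpower 1 c). apply Rle_Rpower_l; lra. rewrite Rpower_1_l. lra.
  - assert (E: forall x, Rpower x c = / Rpower x (-c)).
    { intros x. rewrite <- Rpower_Ropp. f_equal. ring. }
    rewrite !E.
    assert (Rpower (1/2) (-c) <= Rpower u (-c)) by (apply Rle_Rpower_l; lra).
    assert (0 < Rpower (1/2) (-c)) by (unfold Rpower; apply exp_pos).
    apply Rle_trans with (/ Rpower (1/2) (-c)). apply Rinv_le_contravar; lra.
    lra.
Qed.

Let M := Rpower (1/2) (INR j - 1 - alpha) + 1.

Lemma h_RInt_abs1 v w : 1/2 <= v < 1 -> 1/2 <= w < 1 -> Rabs (RInt h v w) <= M * Rabs (w - v).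
Proof.
  intros Hv Hw.
  assert (K: forall v w, 1/2 <= v <= w -> w < 1 -> 0 <= RInt h v w <= M * (w - v)).
  { clear v w Hv Hw. intros v w Hv Hw. split.
    apply RInt_ge_0. lra. apply h_exRInt; lra. intros; apply h_nonneg; lra.
    replace (M * (w - v)) with (RInt (fun _ => M) v w).
    2:{ rewrite RInt_const. apply Rmult_comm. }
    apply RInt_le. lra. apply h_exRInt; lra. apply ex_RInt_const.
    intros x Hx. apply Rle_trans with (Rpower x (INR j - 1 - alpha)).
    apply h_le; auto; lra. apply rp_bound_half; lra. }
  destruct (Rle_dec v w).
  - destruct (K v w) as [A B]; try lra.
    rewrite Rabs_right by lra. rewrite (Rabs_right (w - v)) by lra. lra.
  - destruct (K w v) as [A B]; try lra.
    rewrite <- opp_RInt_swap by (apply h_exRInt; lra).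
    change (Rabs (- RInt h w v) <= M * Rabs (w - v)).
    rewrite Rabs_Ropp. rewrite Rabs_right by lra. rewrite (Rabs_left (w - v)) by lra. lra.
Qed.


Lemma at_right0_lt d : 0 < d -> at_right 0 (fun x => 0 < x < d).
Proof.
  intros Hd. exists (mkposreal d Hd). intros y Hy Hy0. change (Rabs (y - 0) < d) in Hy.
  rewrite Rminus_0_r, Rabs_right in Hy by lra. lra.
Qed.

Lemma at_left1_gt d : 0 < d -> at_left 1 (fun x => 1 - d < x < 1).
Proof.
  intros Hd. exists (mkposreal d Hd). intros y Hy Hy0. change (Rabs (y - 1) < d) in Hy.
  rewrite Rabs_left in Hy by lra. lra.
Qed.

Lemma M_pos : 0 < M.
Proof. unfold M, Rpower. pose proof (exp_pos ((INR j - 1 - alpha) * ln (1/2))). lra. Qed.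

Lemma I_exists : exists I : R,
  filterlim (fun ab : R * R => RInt h (fst ab) (snd ab))
    (filter_prod (at_right 0) (at_left 1)) (locally I).
Proof.
  apply (proj1 (filterlim_locally_cauchy (U := R_CompleteSpace) (F := filter_prod (at_right 0) (at_left 1))
     (fun ab : R * R => RInt h (fst ab) (snd ab)))).
  intros eps. pose proof a_pos as Hapos. pose proof M_pos as HM.
  pose proof (cond_pos eps) as He.
  set (t := eps * a / 4).
  assert (Ht : 0 < t) by (unfold t; apply Rdiv_lt_0_compat; [apply Rmult_lt_0_compat|]; lra).
  set (d0 := Rpower t (1 / a)).
  assert (Hd0 : 0 < d0) by (unfold d0, Rpower; apply exp_pos).
  assert (Gd0 : G d0 = eps / 4).
  { unfold G, d0. rewrite Rpower_mult. replace (1 / a * a) with 1 by (field; lra).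
    rewrite Rpower_1 by auto. unfold t. field. lra. }
  set (d := Rmin d0 (1/2)).
  assert (Hd : 0 < d) by (unfold d; apply Rmin_pos; lra).
  assert (Hd1 : d <= d0) by apply Rmin_l. assert (Hd2 : d <= 1/2) by apply Rmin_r.
  set (d1 := Rmin (1/2) (eps / (4 * M))).
  assert (Hd1p : 0 < d1) by (unfold d1; apply Rmin_pos; try lra; apply Rdiv_lt_0_compat; lra).
  assert (Hd11 : d1 <= 1/2) by apply Rmin_l.
  assert (Hd12 : d1 <= eps / (4 * M)) by apply Rmin_r.
  exists (fun ab => 0 < fst ab < d /\ 1 - d1 < snd ab < 1). split.
  - apply (Filter_prod _ _ _ (fun x => 0 < x < d) (fun y => 1 - d1 < y < 1)).
    apply at_right0_lt; auto. apply at_left1_gt; auto. intros x y Hx Hy; simpl; auto.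
  - intros [a1 b1] [a2 b2] [Ha1 Hb1] [Ha2 Hb2]. simpl in *.
    change (Rabs (RInt h a2 b2 - RInt h a1 b1) < eps).
    assert (E : RInt h a1 b1 = RInt h a1 a2 + RInt h a2 b2 + RInt h b2 b1).
    { assert (C1 : RInt h a1 a2 + RInt h a2 b2 = RInt h a1 b2) by (apply (RInt_Chasles h); apply h_exRInt; lra).
      assert (C2 : RInt h a1 b2 + RInt h b2 b1 = RInt h a1 b1) by (apply (RInt_Chasles h); apply h_exRInt; lra).
      lra. }
    rewrite E.
    pose proof (h_RInt_abs0 a1 a2 ltac:(lra) ltac:(lra)) as A.
    pose proof (h_RInt_abs1 b2 b1 ltac:(lra) ltac:(lra)) as B.
    assert (Rmax (G a1) (G a2) <= eps / 4).
    { rewrite <- Gd0. apply Rmax_lub; apply G_mono; lra. }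
    assert (M * Rabs (b1 - b2) <= eps / 4).
    { assert (Rabs (b1 - b2) <= d1) by (apply Rabs_le; lra).
      apply Rle_trans with (M * d1). apply Rmult_le_compat_l; lra.
      apply Rle_trans with (M * (eps / (4 * M))). apply Rmult_le_compat_l; lra.
      right. field. lra. }
    replace (RInt h a2 b2 - (RInt h a1 a2 + RInt h a2 b2 + RInt h b2 b1))
      with (- (RInt h a1 a2 + RInt h b2 b1)) by ring.
    rewrite Rabs_Ropp. eapply Rle_lt_trans. apply Rabs_triang. lra.
Qed.

Lemma I_gen (I : R) : filterlim (fun ab : R * R => RInt h (fst ab) (snd ab))
    (filter_prod (at_right 0) (at_left 1)) (locally I) ->
  is_RInt_gen h (at_right 0) (at_left 1) I.
Proof.
  intros HI. unfold is_RInt_gen.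
  apply (filterlimi_lim_ext_loc (fun ab : R * R => RInt h (fst ab) (snd ab))); auto.
  apply (Filter_prod _ _ _ (fun x => 0 < x < 1) (fun y => 1 - 1 < y < 1)).
  apply at_right0_lt; lra. apply at_left1_gt; lra.
  intros x y Hx Hy. simpl. apply (RInt_correct (V:=R_CompleteNormedModule)). apply h_exRInt; lra.
Qed.

Lemma I_approx (I : R) : filterlim (fun ab : R * R => RInt h (fst ab) (snd ab))
    (filter_prod (at_right 0) (at_left 1)) (locally I) ->
  forall eta, 0 < eta -> exists d, 0 < d /\
    forall v w, 0 < v < d -> 1 - d < w < 1 -> Rabs (RInt h v w - I) < eta.
Proof.
  intros HI eta Heta.
  destruct (HI _ (locally_ball I (mkposreal eta Heta))) as [Q R [e1 He1] [e2 He2] HP].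
  exists (Rmin e1 e2). split. apply Rmin_pos; apply cond_pos.
  intros v w Hv Hw. pose proof (Rmin_l e1 e2). pose proof (Rmin_r e1 e2).
  apply (HP v w).
  - apply He1. change (Rabs (v - 0) < e1). rewrite Rminus_0_r, Rabs_right; lra. lra.
  - apply He2. change (Rabs (w - 1) < e2). rewrite Rabs_left; lra. lra.
Qed.

Lemma I_upper (I : R) : filterlim (fun ab : R * R => RInt h (fst ab) (snd ab))
    (filter_prod (at_right 0) (at_left 1)) (locally I) ->
  forall v w, 0 < v <= w -> w < 1 -> RInt h v w <= I.
Proof.
  intros HI v w Hv Hw. apply Rnot_lt_le. intros Hlt.
  destruct (I_approx I HI (RInt h v w - I)) as [d [Hd Hap]]. lra.
  set (v' := Rmin v d / 2). set (w' := (Rmax w (1 - d) + 1) / 2).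
  assert (0 < v' <= v /\ v' < d).
  { unfold v'. pose proof (Rmin_l v d). pose proof (Rmin_r v d).
    assert (0 < Rmin v d) by (apply Rmin_pos; lra). lra. }
  assert (w <= w' < 1 /\ 1 - d < w').
  { unfold w'. pose proof (Rmax_l w (1 - d)). pose proof (Rmax_r w (1-d)).
    assert (Rmax w (1 - d) < 1) by (apply Rmax_lub_lt; lra). lra. }
  specialize (Hap v' w' ltac:(lra) ltac:(lra)).
  assert (E : RInt h v' w' = RInt h v' v + RInt h v w + RInt h w w').
  { assert (C1 : RInt h v' v + RInt h v w = RInt h v' w) by (apply (RInt_Chasles h); apply h_exRInt; lra).
    assert (C2 : RInt h v' w + RInt h w w' = RInt h v' w') by (apply (RInt_Chasles h); apply h_exRInt; lra).
    lra. }
  pose proof (h_RInt_bound v' v ltac:(lra) ltac:(lra)).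
  pose proof (h_RInt_bound w w' ltac:(lra) ltac:(lra)).
  rewrite E in Hap. rewrite Rabs_right in Hap by lra. lra.
Qed.

End Integral.

Ltac pos := repeat (apply Rmult_lt_0_compat || apply Rdiv_lt_0_compat || apply pow_lt
   || apply exp_pos || apply Rinv_0_lt_compat); try lra.

Lemma hD_id alpha k j (x L : R) : (2 <= j)%nat -> (j <= k)%nat -> 0 < x -> 1 <= L ->
  Rj_integrand alpha k j (L / (x + L)) * ((L + 1) / (x + (L + 1)) - L / (x + L)) =
  Rpower x alpha * Rpower L (- (1 + alpha)) * L ^ j * x ^ (k - j)
   / ((x + L) ^ (k - 1) * (x + L + 1)).
Proof.
  intros Hj Hjk Hx HL.
  assert (Hu : 0 < L / (x + L) < 1).
  { split. pos. apply (Rmult_lt_reg_r (x + L)). lra. unfold Rdiv. rewrite Rmult_assoc, Rinv_l; lra. }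
  rewrite h_form by auto.
  replace (1 - L / (x + L)) with (x / (x + L)) by (field; lra).
  replace ((L + 1) / (x + (L + 1)) - L / (x + L)) with (x / ((x + L) * (x + L + 1))) by (field; lra).
  apply ln_inv.
  - unfold Rpower. pos.
  - unfold Rpower. pos.
  - unfold Rpower.
    rewrite !ln_mult by pos. rewrite !ln_div by pos. rewrite !ln_mult by pos.
    rewrite !ln_exp. rewrite !ln_pow by pos.
    rewrite !minus_INR by lia. simpl (INR 1).
    ring.
Qed.

Lemma near1_between lo v hi c : lo <= v <= hi -> near1 lo c -> near1 hi c -> near1 v c.
Proof. rewrite !near1_iff. lra. Qed.

Lemma J_bound alpha k j (x L : R) : (2 <= j)%nat -> (j <= k)%nat -> 1 < alpha < 2 ->
  0 < x -> 2 <= L ->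
  4 * Rabs (INR j - 1 - alpha) * (1 / L) <= 1 ->
  4 * Rabs (INR k - INR j + alpha - 1) * (1 / L) <= 1 ->
  let c := 4 * Rabs (INR j - 1 - alpha) * (1 / L) + 2 * (4 * Rabs (INR k - INR j + alpha - 1) * (1 / L)) in
  let ul := L / (x + L) in let ul' := (L + 1) / (x + (L + 1)) in
  (1 - c) * (Rj_integrand alpha k j ul * (ul' - ul)) <= RInt (Rj_integrand alpha k j) ul ul' <=
  (1 + c) * (Rj_integrand alpha k j ul * (ul' - ul)).
Proof.
  intros Hj Hjk Ha Hx HL H1 H2 c ul ul'.
  set (h := Rj_integrand alpha k j).
  set (e1 := INR j - 1 - alpha). set (e2 := INR k - INR j + alpha - 1).
  assert (Hul : 0 < ul < 1).
  { unfold ul. split. pos. apply (Rmult_lt_reg_r (x + L)). lra. unfold Rdiv. rewrite Rmult_assoc, Rinv_l; lra. }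
  assert (Hul' : ul < ul' < 1).
  { unfold ul, ul'. split.
    - apply Rminus_gt_0_lt. replace ((L + 1) / (x + (L + 1)) - L / (x + L)) with (x / ((x + L) * (x + L + 1))) by (field; lra). pos.
    - apply (Rmult_lt_reg_r (x + (L + 1))). lra. unfold Rdiv. rewrite Rmult_assoc, Rinv_l; lra. }
  assert (Hhul : 0 <= h ul) by (apply h_nonneg; lra).
  assert (Hpt : forall u, ul <= u <= ul' -> (1 - c) * h ul <= h u <= (1 + c) * h ul).
  { intros u Hu.
    assert (U1 : L <= u * (x + L)).
    { apply Rle_trans with (ul * (x + L)). unfold ul. right. field. lra.
      apply Rmult_le_compat_r; lra. }
    assert (U2 : u * (x + L + 1) <= L + 1).
    { apply Rle_trans with (ul' * (x + L + 1)). apply Rmult_le_compat_r; lra.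
      unfold ul'. right. field. lra. }
    assert (Er : u / ul = u * (x + L) / L) by (unfold ul; field; lra).
    assert (Es : (1 - u) / (1 - ul) = (1 - u) * (x + L) / x) by (unfold ul; field; lra).
    assert (R1 : Rabs (u / ul - 1) <= 1 / L).
    { rewrite Er. apply Rabs_le. split.
      - apply Rle_trans with 0. assert (0 < 1 / L) by pos. lra.
        apply Rge_le, Rge_minus, Rle_ge. apply (Rmult_le_reg_r L). lra.
        unfold Rdiv. rewrite Rmult_assoc, Rinv_l; lra.
      - replace (u * (x + L) / L - 1) with ((u * (x + L) - L) * / L) by (field; lra).
        unfold Rdiv. rewrite Rmult_1_l. rewrite <- (Rmult_1_l (/ L)) at 2.
        apply Rmult_le_compat_r. left; apply Rinv_0_lt_compat; lra. lra. }
    assert (R2 : Rabs ((1 - u) / (1 - ul) - 1) <= 1 / L).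
    { rewrite Es. apply Rabs_le. split.
      - assert (W : (x + L + 1) * (L - u * (x + L)) >= - x) by nra.
        assert (- (1 / (x + L + 1)) <= (1 - u) * (x + L) / x - 1).
        { replace ((1 - u) * (x + L) / x - 1) with ((L - u * (x + L)) / x) by (field; lra).
          apply (Rmult_le_reg_r (x * (x + L + 1))). pos.
          replace (- (1 / (x + L + 1)) * (x * (x + L + 1))) with (- x) by (field; lra).
          replace ((L - u * (x + L)) / x * (x * (x + L + 1))) with ((x + L + 1) * (L - u * (x + L))) by (field; lra).
          lra. }
        assert (1 / (x + L + 1) <= 1 / L).
        { apply Rmult_le_compat_l. lra. apply Rinv_le_contravar; lra. }
        lra.
      - apply Rle_trans with 0. 2:{ assert (0 < 1 / L) by pos. lra. }
        apply Rle_minus. apply (Rmult_le_reg_r x). lra.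
        unfold Rdiv. rewrite Rmult_assoc, Rinv_l by lra. nra. }
    assert (N1 : near1 (Rpower (u / ul) e1) (4 * Rabs e1 * (1 / L))).
    { apply rp_near; auto. apply (Rmult_le_reg_r L). lra. unfold Rdiv. rewrite Rmult_1_l, Rinv_l; lra. }
    assert (N2 : near1 (Rpower ((1 - u) / (1 - ul)) e2) (4 * Rabs e2 * (1 / L))).
    { apply rp_near; auto. apply (Rmult_le_reg_r L). lra. unfold Rdiv. rewrite Rmult_1_l, Rinv_l; lra. }
    pose proof (near1_mul _ _ _ _ N1 N2 H1) as N. fold c in N. rewrite near1_iff in N.
    assert (Eh : h u = Rpower (u / ul) e1 * Rpower ((1 - u) / (1 - ul)) e2 * h ul).
    { unfold h. rewrite !h_form by (auto; lra). fold e1 e2.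
      replace (Rpower u e1) with (Rpower (u / ul) e1 * Rpower ul e1).
      2:{ rewrite Rpower_mult_distr by (pos; lra). f_equal. field. lra. }
      replace (Rpower (1 - u) e2) with (Rpower ((1 - u) / (1 - ul)) e2 * Rpower (1 - ul) e2).
      2:{ rewrite Rpower_mult_distr by (pos; lra). f_equal. field. lra. }
      ring. }
    rewrite Eh. destruct N as [N1' N2']. split; apply Rmult_le_compat_r; auto. }
  assert (Hex : ex_RInt h ul ul').
  { apply (ex_RInt_continuous (V:=R_CompleteNormedModule)). intros z Hz. apply h_cont.
    rewrite Rmin_left in Hz by lra. rewrite Rmax_right in Hz by lra. lra. }
  split.
  - replace ((1 - c) * (h ul * (ul' - ul))) with (RInt (fun _ => (1 - c) * h ul) ul ul').
    2:{ rewrite RInt_const. change (scal (ul' - ul) ((1 - c) * h ul)) with ((ul' - ul) * ((1 - c) * h ul)).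
      change ((ul' - ul) * ((1 - c) * h ul) = (1 - c) * (h ul * (ul' - ul))). ring. }
    apply RInt_le. lra. apply ex_RInt_const. auto. intros z Hz. apply Hpt. lra.
  - replace ((1 + c) * (h ul * (ul' - ul))) with (RInt (fun _ => (1 + c) * h ul) ul ul').
    2:{ rewrite RInt_const. change (scal (ul' - ul) ((1 + c) * h ul)) with ((ul' - ul) * ((1 + c) * h ul)).
      change ((ul' - ul) * ((1 + c) * h ul) = (1 + c) * (h ul * (ul' - ul))). ring. }
    apply RInt_le. lra. auto. apply ex_RInt_const. intros z Hz. apply Hpt. lra.
Qed.

Lemma pow_near r n eta : Rabs (r - 1) <= eta -> eta <= 1/2 -> 4 * INR n * eta <= 1 ->
  near1 (r ^ n) (4 * INR n * eta).
Proof.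
  intros H1 H2 H3. rewrite Rabs_le_between' in H1.
  rewrite <- Rpower_pow by lra. rewrite <- (Rabs_right (INR n)) at 2 by (apply Rle_ge, pos_INR).
  apply rp_near. apply Rabs_le_between'. lra. lra. rewrite Rabs_right by (apply Rle_ge, pos_INR). auto.
Qed.

Lemma near1_1 c : 0 <= c -> near1 1 c.
Proof. intros; unfold near1. rewrite Rminus_eq_0, Rabs_R0. auto. Qed.

Lemma pow_div r s n : s <> 0 -> (r / s) ^ n = r ^ n / s ^ n.
Proof. intros. unfold Rdiv. rewrite Rpow_mult_distr, pow_inv. reflexivity. Qed.

Lemma F1_near (j : nat) (L : R) : (1 <= j)%nat -> 0 < L -> INR j / L <= 1/2 ->
  4 * INR j * (INR j / L) <= 1 ->
  near1 (falling (L + 1) j / L ^ j) (4 * INR j * (INR j / L)).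
Proof.
  intros Hj HL H1 H2.
  assert (Hj1 : 1 <= INR j) by (replace 1 with (INR 1) by reflexivity; apply le_INR; lia).
  assert (HjL : INR j <= L / 2).
  { apply (Rmult_le_reg_r (/ L)). apply Rinv_0_lt_compat; lra.
    replace (L / 2 * / L) with (1/2) by (field; lra). exact H1. }
  destruct (falling_bounds (L + 1) j) as [[B0 B1] B2]. lra.
  apply near1_between with (((L + 1 - INR j + 1) / L) ^ j) (((L + 1) / L) ^ j).
  - rewrite !pow_div by lra. assert (0 < L ^ j) by (apply pow_lt; lra). split.
    + unfold Rdiv. apply Rmult_le_compat_r. left; apply Rinv_0_lt_compat; lra. auto.
    + unfold Rdiv. apply Rmult_le_compat_r. left; apply Rinv_0_lt_compat; lra. auto.
  - apply pow_near; auto.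
    replace ((L + 1 - INR j + 1) / L - 1) with (- ((INR j - 2) / L)) by (field; lra).
    rewrite Rabs_Ropp. unfold Rdiv. assert (0 < / L) by (apply Rinv_0_lt_compat; lra).
    apply Rabs_le. split; nra.
  - apply near1_weak with (4 * INR j * (1 / L)).
    apply pow_near.
    replace ((L + 1) / L - 1) with (1 / L) by (field; lra).
    rewrite Rabs_right. lra. apply Rle_ge, Rdiv_le_0_compat; lra.
    apply Rle_trans with (INR j / L). unfold Rdiv. apply Rmult_le_compat_r. left; apply Rinv_0_lt_compat; lra. lra. lra.
    apply Rle_trans with (4 * INR j * (INR j / L)); auto.
    apply Rmult_le_compat_l. lra. unfold Rdiv. apply Rmult_le_compat_r. left; apply Rinv_0_lt_compat; lra. lra.
    apply Rmult_le_compat_l. lra. unfold Rdiv. apply Rmult_le_compat_r. left; apply Rinv_0_lt_compat; lra. lra.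
Qed.

Lemma mono4 r k ix : 0 <= r <= k -> 0 < ix -> 4 * r * (r * ix) <= 4 * k * (k * ix).
Proof. intros. assert (r * r <= k * k) by nra. nra. Qed.

Lemma F2_near (k j : nat) (x : R) : (j <= k)%nat -> 1 <= x -> INR k / x <= 1/2 ->
  4 * INR k * (INR k / x) <= 1 ->
  near1 (falling (x - 1) (k - j) / x ^ (k - j)) (4 * INR k * (INR k / x)).
Proof.
  intros Hjk Hx H1 H2. set (r := (k - j)%nat).
  assert (Hr : INR r <= INR k) by (apply le_INR; unfold r; lia).
  assert (Hr0 : 0 <= INR r) by apply pos_INR.
  assert (HkX : INR k <= x / 2).
  { apply (Rmult_le_reg_r (/ x)). apply Rinv_0_lt_compat; lra.
    replace (x / 2 * / x) with (1/2) by (field; lra). exact H1. }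
  assert (Hix : 0 < / x) by (apply Rinv_0_lt_compat; lra).
  destruct (falling_bounds (x - 1) r) as [[B0 B1] B2]. lra.
  assert (Hxr : 0 < x ^ r) by (apply pow_lt; lra).
  apply near1_between with (((x - INR r) / x) ^ r) 1.
  - rewrite pow_div by lra. split.
    + unfold Rdiv. apply Rmult_le_compat_r. left; apply Rinv_0_lt_compat; auto.
      replace (x - INR r) with (x - 1 - INR r + 1) by ring. auto.
    + apply (Rmult_le_reg_r (x ^ r)). auto. unfold Rdiv. rewrite Rmult_assoc, Rinv_l by lra.
      rewrite Rmult_1_l, Rmult_1_r. apply Rle_trans with ((x - 1) ^ r). auto.
      apply pow_incr. lra.
  - apply near1_weak with (4 * INR r * (INR r / x)).
    apply pow_near.
    replace ((x - INR r) / x - 1) with (- (INR r / x)) by (field; lra).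
    rewrite Rabs_Ropp. rewrite Rabs_right. lra. apply Rle_ge. unfold Rdiv. nra.
    unfold Rdiv in *. nra.
    unfold Rdiv in *. apply Rle_trans with (4 * INR k * (INR k * / x)); auto. apply mono4; lra.
    unfold Rdiv in *. apply mono4; lra.
  - apply near1_1. unfold Rdiv in *. nra.
Qed.

Lemma F3_near (k : nat) (y : R) : (1 <= k)%nat -> 1 <= y -> INR k / y <= 1/2 ->
  4 * INR k * (INR k / y) <= 1 ->
  near1 (falling y k / (y ^ (k - 1) * (y + 1))) (4 * INR k * (INR k / y)).
Proof.
  intros Hk Hy H1 H2.
  assert (Hk1 : 1 <= INR k) by (replace 1 with (INR 1) by reflexivity; apply le_INR; lia).
  assert (HkY : INR k <= y / 2).
  { apply (Rmult_le_reg_r (/ y)). apply Rinv_0_lt_compat; lra.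
    replace (y / 2 * / y) with (1/2) by (field; lra). exact H1. }
  assert (Hiy : 0 < / y) by (apply Rinv_0_lt_compat; lra).
  destruct (falling_bounds y k) as [[B0 B1] B2]. lra.
  assert (Ek : forall z, z ^ k = z ^ (k - 1) * z).
  { intros z. replace k with (S (k - 1)) at 1 by lia. simpl. ring. }
  assert (Hy1 : 0 < y ^ (k - 1)) by (apply pow_lt; lra).
  assert (Hy2 : y ^ (k - 1) <= (y + 1) ^ (k - 1)) by (apply pow_incr; lra).
  assert (Hden : 0 < y ^ (k - 1) * (y + 1)) by (apply Rmult_lt_0_compat; lra).
  apply near1_between with (((y - INR k + 1) / (y + 1)) ^ k) 1.
  - rewrite pow_div by lra. split.
    + apply Rle_trans with ((y - INR k + 1) ^ k / (y ^ (k - 1) * (y + 1))).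
      * unfold Rdiv. apply Rmult_le_compat_l. auto. apply Rinv_le_contravar. auto.
        rewrite Ek. apply Rmult_le_compat_r; lra.
      * unfold Rdiv. apply Rmult_le_compat_r. left; apply Rinv_0_lt_compat; auto. auto.
    + apply (Rmult_le_reg_r (y ^ (k - 1) * (y + 1))). auto. unfold Rdiv.
      rewrite Rmult_assoc, Rinv_l by lra. rewrite Rmult_1_l, Rmult_1_r.
      apply Rle_trans with (y ^ k). auto. rewrite Ek. apply Rmult_le_compat_l; lra.
  - apply pow_near.
    replace ((y - INR k + 1) / (y + 1) - 1) with (- (INR k / (y + 1))) by (field; lra).
    rewrite Rabs_Ropp. rewrite Rabs_right.
    unfold Rdiv. apply Rmult_le_compat_l. lra. apply Rinv_le_contravar; lra.
    apply Rle_ge. apply Rdiv_le_0_compat; lra. auto. auto.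
  - apply near1_1. unfold Rdiv in *. nra.
Qed.

Definition Tk (k j : nat) (x : R) (l : nat) :=
  gbinom (x + INR l - INR k) (l + 1 - j) / gbinom (x + INR l) (l + 1).

Lemma div_le_of (a L t : R) : 0 < L -> 0 < t -> a / t <= L -> a / L <= t.
Proof.
  intros HL Ht H.
  assert (H1 : a <= L * t).
  { apply (Rmult_le_reg_r (/ t)). apply Rinv_0_lt_compat; auto.
    replace (L * t * / t) with L by (field; lra). exact H. }
  apply (Rmult_le_reg_r L); auto. replace (a / L * L) with a by (field; lra). lra.
Qed.

Lemma div_le_mono (a y z : R) : 0 <= a -> 0 < y <= z -> a / z <= a / y.
Proof.
  intros. unfold Rdiv. apply Rmult_le_compat_l; auto. apply Rinv_le_contravar; lra.
Qed.

Lemma near1_ratio J H c : 0 < H -> (1 - c) * H <= J <= (1 + c) * H -> near1 (J / H) c.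
Proof.
  intros HH [A B]. rewrite near1_iff. split.
  - apply (Rmult_le_reg_r H); auto. replace (J / H * H) with J by (field; lra). lra.
  - apply (Rmult_le_reg_r H); auto. replace (J / H * H) with J by (field; lra). lra.
Qed.

Lemma PT alpha k j (p : nat -> R) p0 theta :
  (2 <= j)%nat -> (j <= k)%nat -> 1 < alpha < 2 -> 0 < p0 ->
  is_lim_seq (fun l : nat => p l / (p0 * Rpower (INR l) (- (1 + alpha)))) 1 ->
  0 < theta <= 1/16 ->
  exists L0 : nat, exists X0 : R, 1 <= X0 /\ (1 <= L0)%nat /\ (k <= L0)%nat /\
  forall x l, X0 <= x -> (L0 <= l)%nat ->
   exists rho, near1 rho (13 * theta) /\
     Rpower x alpha * (p l * Tk k j x l) =
     rho * (p0 * RInt (Rj_integrand alpha k j) (INR l / (x + INR l)) ((INR l + 1) / (x + (INR l + 1)))).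
Proof.
  intros Hj Hjk Ha Hp0 Hlim Hth.
  apply is_lim_seq_spec in Hlim.
  destruct (Hlim (mkposreal theta (proj1 Hth))) as [N HN]. simpl in HN.
  set (e1 := INR j - 1 - alpha). set (e2 := INR k - INR j + alpha - 1).
  set (B := 2 + INR k + 2 * INR j + (4 * Rabs e1 + 8 * Rabs e2 + 4 * INR j * INR j) / theta).
  destruct (INR_unbounded B) as [L1 HL1].
  exists (Nat.max L1 (Nat.max N (Nat.max k 1))).
  set (X0 := 1 + 2 * INR k + 4 * INR k * INR k / theta).
  assert (Hk0 : 0 <= INR k) by apply pos_INR.
  assert (Hj2 : 2 <= INR j) by (replace 2 with (INR 2) by reflexivity; apply le_INR; lia).
  assert (Hjk' : INR j <= INR k) by (apply le_INR; lia).
  assert (Hq0 : 0 <= (4 * Rabs e1 + 8 * Rabs e2 + 4 * INR j * INR j) / theta).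
  { apply Rdiv_le_0_compat; [|lra]. pose proof (Rabs_pos e1); pose proof (Rabs_pos e2). nra. }
  assert (HX0 : 0 <= 4 * INR k * INR k / theta) by (apply Rdiv_le_0_compat; [nra|lra]).
  exists X0. split; [unfold X0; lra|]. split; [lia|]. split; [lia|].
  intros x l Hx Hl.
  set (L := INR l).
  assert (HLB : B < L).
  { apply Rlt_le_trans with (INR L1). lra. apply le_INR. lia. }
  assert (HL2 : 2 <= L) by (unfold B in HLB; lra).
  assert (HLpos : 0 < L) by lra.
  assert (Hxpos : 1 <= x) by (unfold X0 in Hx; lra).
  assert (Cc : (4 * Rabs e1 + 8 * Rabs e2) / L <= theta).
  { apply div_le_of; try lra. apply Rle_trans with ((4 * Rabs e1 + 8 * Rabs e2 + 4 * INR j * INR j) / theta).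
    unfold Rdiv. apply Rmult_le_compat_r. left; apply Rinv_0_lt_compat; lra. nra.
    unfold B in HLB. lra. }
  assert (Cj1 : INR j / L <= 1/2).
  { apply div_le_of; try lra. unfold B in HLB. replace (INR j / (1/2)) with (2 * INR j) by field. lra. }
  assert (Cj2 : 4 * INR j * (INR j / L) <= theta).
  { replace (4 * INR j * (INR j / L)) with ((4 * INR j * INR j) / L) by (field; lra).
    apply div_le_of; try lra. apply Rle_trans with ((4 * Rabs e1 + 8 * Rabs e2 + 4 * INR j * INR j) / theta).
    unfold Rdiv. apply Rmult_le_compat_r. left; apply Rinv_0_lt_compat; lra.
    pose proof (Rabs_pos e1); pose proof (Rabs_pos e2). lra.
    unfold B in HLB. lra. }
  assert (Cz : forall z, X0 <= z -> INR k / z <= 1/2 /\ 4 * INR k * (INR k / z) <= theta).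
  { intros z Hz. assert (0 < z) by (unfold X0 in Hz; lra). split.
    - apply div_le_of; try lra. replace (INR k / (1/2)) with (2 * INR k) by field. unfold X0 in Hz. lra.
    - replace (4 * INR k * (INR k / z)) with ((4 * INR k * INR k) / z) by (field; lra).
      apply div_le_of; try lra. unfold X0 in Hz. lra. }
  set (q := p l / (p0 * Rpower L (- (1 + alpha)))).
  assert (Hq : near1 q theta).
  { unfold near1. left. apply HN. lia. }
  assert (HRp : 0 < Rpower L (- (1 + alpha))) by (unfold Rpower; apply exp_pos).
  assert (Ep : p l = q * (p0 * Rpower L (- (1 + alpha)))) by (unfold q; field; lra).
  set (h := Rj_integrand alpha k j).
  set (ul := L / (x + L)). set (ul' := (L + 1) / (x + (L + 1))).
  set (J := RInt h ul ul').
  set (c := 4 * Rabs e1 * (1 / L) + 2 * (4 * Rabs e2 * (1 / L))).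
  assert (Hc : c <= theta).
  { unfold c. replace (4 * Rabs e1 * (1 / L) + 2 * (4 * Rabs e2 * (1 / L))) with ((4 * Rabs e1 + 8 * Rabs e2) / L) by (field; lra). auto. }
  assert (Hc0 : 0 <= c).
  { unfold c. pose proof (Rabs_pos e1); pose proof (Rabs_pos e2). assert (0 < 1 / L) by (apply Rdiv_lt_0_compat; lra). nra. }
  assert (He1 : 4 * Rabs e1 * (1 / L) <= 1).
  { pose proof (Rabs_pos e2). assert (0 < 1 / L) by (apply Rdiv_lt_0_compat; lra).
    assert (0 <= 4 * Rabs e2 * (1 / L)) by nra. unfold c in Hc. lra. }
  assert (He2 : 4 * Rabs e2 * (1 / L) <= 1).
  { pose proof (Rabs_pos e1). assert (0 < 1 / L) by (apply Rdiv_lt_0_compat; lra).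
    assert (0 <= 4 * Rabs e1 * (1 / L)) by nra. unfold c in Hc. lra. }
  pose proof (J_bound alpha k j x L Hj Hjk Ha ltac:(lra) HL2 He1 He2) as JB.
  simpl in JB. fold e1 e2 c h ul ul' J in JB.
  set (hD := h ul * (ul' - ul)).
  assert (EhD : hD = Rpower x alpha * Rpower L (- (1 + alpha)) * L ^ j * x ^ (k - j)
                    / ((x + L) ^ (k - 1) * (x + L + 1))).
  { unfold hD, h, ul, ul'. apply hD_id; auto; lra. }
  assert (HhD : 0 < hD).
  { rewrite EhD. apply Rdiv_lt_0_compat.
    repeat apply Rmult_lt_0_compat; try (unfold Rpower; apply exp_pos); apply pow_lt; lra.
    apply Rmult_lt_0_compat. apply pow_lt; lra. lra. }
  set (sigma := J / hD).
  assert (Hs : near1 sigma theta).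
  { apply near1_weak with c; auto. apply near1_ratio; auto. }
  assert (ET : Tk k j x l = falling (x - 1) (k - j) * falling (L + 1) j / falling (x + L) k).
  { unfold Tk, L. rewrite T_repr by (auto; first [lia | lra]). rewrite plus_INR. reflexivity. }
  set (F1 := falling (L + 1) j / L ^ j).
  set (F2 := falling (x - 1) (k - j) / x ^ (k - j)).
  set (F3 := falling (x + L) k / ((x + L) ^ (k - 1) * (x + L + 1))).
  assert (N1 : near1 F1 theta).
  { apply near1_weak with (4 * INR j * (INR j / L)); auto. apply F1_near; auto; try lia; try lra. }
  assert (N2 : near1 F2 theta).
  { destruct (Cz x Hx). apply near1_weak with (4 * INR k * (INR k / x)); auto. apply F2_near; auto; try lra. }
  assert (N3 : near1 F3 theta).
  { destruct (Cz (x + L)) as [Z1 Z2]. lra. apply near1_weak with (4 * INR k * (INR k / (x + L))); auto.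
    apply F3_near; auto; try lia; try lra. }
  assert (PF : 0 < falling (x + L) k).
  { apply falling_pos. destruct (Cz x Hx) as [Z1 Z2].
    assert (INR k <= x / 2) by (apply (Rmult_le_reg_r (/ x)); [apply Rinv_0_lt_compat; lra|];
      replace (x / 2 * / x) with (1/2) by (field; lra); exact Z1). lra. }
  assert (PL : 0 < L ^ j) by (apply pow_lt; lra).
  assert (Px : 0 < x ^ (k - j)) by (apply pow_lt; lra).
  assert (Pxl : 0 < (x + L) ^ (k - 1)) by (apply pow_lt; lra).
  assert (Hs0 : 0 < sigma) by (rewrite near1_iff in Hs; lra).
  exists (q * F1 * F2 * / F3 * / sigma). split.
  - assert (M1 := near1_mul _ _ _ _ Hq N1 ltac:(lra)).
    assert (M2 := near1_mul _ _ _ _ M1 N2 ltac:(lra)).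
    assert (I3 := near1_inv _ _ N3 ltac:(lra)).
    assert (M3 := near1_mul _ _ _ _ M2 I3 ltac:(lra)).
    assert (I4 := near1_inv _ _ Hs ltac:(lra)).
    assert (M4 := near1_mul _ _ _ _ M3 I4 ltac:(lra)).
    apply near1_weak with (theta + 2 * theta + 2 * theta + 2 * (2 * theta) + 2 * (2 * theta)); auto. lra.
  - rewrite ET, Ep.
    assert (EJ : J = sigma * hD) by (unfold sigma; unfold Rdiv; rewrite Rmult_assoc, Rinv_l by lra; rewrite Rmult_1_r; reflexivity).
    rewrite EJ, EhD. unfold F1, F2, F3.
    assert (0 < falling (x - 1) (k - j)).
    { apply falling_pos. destruct (Cz x Hx) as [Z1 Z2].
      assert (INR k <= x / 2) by (apply (Rmult_le_reg_r (/ x)); [apply Rinv_0_lt_compat; lra|];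
        replace (x / 2 * / x) with (1/2) by (field; lra); exact Z1).
      assert (INR (k - j) <= INR k) by (apply le_INR; lia). lra. }
    assert (0 < falling (L + 1) j).
    { apply falling_pos. unfold B in HLB. lra. }
    field. repeat split; lra.
Qed.

Lemma head_term alpha k j l : (2 <= j)%nat -> (j <= l + 1)%nat -> 1 < alpha < 2 ->
  exists C, 0 <= C /\ forall x, INR k + INR l + 1 <= x ->
    0 <= Tk k j x l /\ Rpower x alpha * Tk k j x l <= C * Rpower x (alpha - 2).
Proof.
  intros Hj Hjl Ha.
  set (r1 := (l + 1 - j)%nat).
  exists (2 ^ r1 * INR (fact (l + 1)) / INR (fact r1)).
  split. { apply Rdiv_le_0_compat. apply Rmult_le_pos. apply pow_le; lra. left; apply INR_fact_pos. apply INR_fact_pos. }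
  intros x Hx.
  set (L := INR l).
  assert (Hk0 : 0 <= INR k) by apply pos_INR. assert (HL0 : 0 <= L) by apply pos_INR.
  fold L in Hx. assert (Hx1 : 1 <= x) by lra.
  assert (Er1 : INR r1 = L + 1 - INR j).
  { unfold r1. rewrite minus_INR by lia. rewrite plus_INR. reflexivity. }
  assert (Hjn : INR j <= L + 1).
  { replace (L + 1) with (INR (l + 1)) by (rewrite plus_INR; reflexivity). apply le_INR; lia. }
  destruct (falling_bounds (x + L - INR k) r1) as [[A0 A1] A2]. rewrite Er1. pose proof (pos_INR j). lra.
  destruct (falling_bounds (x + L) (l + 1)) as [[B0 B1] B2].
  rewrite plus_INR. simpl. fold L. lra.
  replace (x + L - INR (l + 1) + 1) with x in B1 by (rewrite plus_INR; simpl; fold L; ring).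
  assert (Hxl : 0 < x ^ (l + 1)) by (apply pow_lt; lra).
  assert (HT : Tk k j x l = falling (x + L - INR k) r1 * INR (fact (l + 1)) /
                 (INR (fact r1) * falling (x + L) (l + 1))).
  { unfold Tk, gbinom. fold L r1. pose proof (INR_fact_pos r1). pose proof (INR_fact_pos (l+1)).
    field. repeat split; lra. }
  pose proof (INR_fact_pos r1). pose proof (INR_fact_pos (l+1)).
  assert (T0 : 0 <= Tk k j x l).
  { rewrite HT. apply Rdiv_le_0_compat. apply Rmult_le_pos; lra. apply Rmult_lt_0_compat; lra. }
  split; auto.
  assert (Tb : Tk k j x l <= 2 ^ r1 * INR (fact (l + 1)) / INR (fact r1) * / x ^ j).
  { rewrite HT.
    assert (falling (x + L - INR k) r1 <= (2 * x) ^ r1).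
    { apply Rle_trans with ((x + L - INR k) ^ r1). auto. apply pow_incr. lra. }
    assert (Ep : x ^ (l + 1) = x ^ r1 * x ^ j) by (rewrite <- pow_add; f_equal; unfold r1; lia).
    assert (0 < x ^ r1) by (apply pow_lt; lra). assert (0 < x ^ j) by (apply pow_lt; lra).
    apply Rle_trans with ((2 * x) ^ r1 * INR (fact (l + 1)) / (INR (fact r1) * x ^ (l + 1))).
    - unfold Rdiv. apply Rmult_le_compat. apply Rmult_le_pos; lra.
      left; apply Rinv_0_lt_compat; apply Rmult_lt_0_compat; lra.
      apply Rmult_le_compat_r; lra.
      apply Rinv_le_contravar. apply Rmult_lt_0_compat; lra. apply Rmult_le_compat_l; lra.
    - rewrite Rpow_mult_distr, Ep. right. field. repeat split; lra. }
  assert (Ex : Rpower x alpha * / x ^ j = Rpower x (alpha - INR j)).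
  { rewrite <- Rpower_pow by lra. unfold Rminus. rewrite Rpower_plus, Rpower_Ropp. reflexivity. }
  assert (Hmono : Rpower x (alpha - INR j) <= Rpower x (alpha - 2)).
  { apply Rle_Rpower. lra. assert (2 <= INR j) by (replace 2 with (INR 2) by reflexivity; apply le_INR; lia). lra. }
  assert (Hrp : 0 < Rpower x alpha) by (unfold Rpower; apply exp_pos).
  apply Rle_trans with (Rpower x alpha * (2 ^ r1 * INR (fact (l + 1)) / INR (fact r1) * / x ^ j)).
  apply Rmult_le_compat_l; lra.
  replace (Rpower x alpha * (2 ^ r1 * INR (fact (l + 1)) / INR (fact r1) * / x ^ j))
    with (2 ^ r1 * INR (fact (l + 1)) / INR (fact r1) * (Rpower x alpha * / x ^ j)) by ring.
  rewrite Ex. apply Rmult_le_compat_l; auto.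
  apply Rdiv_le_0_compat. apply Rmult_le_pos. apply pow_le; lra. lra. lra.
Qed.

Fixpoint psum (f : nat -> R) (n : nat) : R :=
  match n with O => 0 | S n' => psum f n' + f n' end.

Lemma psum_split f a n : psum f (a + n) = psum f a + psum (fun i => f (a + i)%nat) n.
Proof. induction n as [|n IH]; simpl. rewrite Nat.add_0_r; ring. rewrite Nat.add_succ_r. simpl. rewrite IH. ring. Qed.

Lemma psum_sum f n : psum f (S n) = sum_f_R0 f n.
Proof. induction n as [|n IH]. simpl. ring. simpl psum in *. rewrite IH. simpl. reflexivity. Qed.

Lemma psum_nonneg f n : (forall i, 0 <= f i) -> 0 <= psum f n.
Proof. intros H. induction n; simpl. lra. pose proof (H n). lra. Qed.

Lemma psum_mono f n m : (forall i, 0 <= f i) -> (n <= m)%nat -> psum f n <= psum f m.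
Proof.
  intros H Hnm. replace m with (n + (m - n))%nat by lia. rewrite psum_split.
  pose proof (psum_nonneg (fun i => f (n + i)%nat) (m - n) (fun i => H _)). lra.
Qed.

Lemma psum_le f g n : (forall i, f i <= g i) -> psum f n <= psum g n.
Proof. intros H. induction n; simpl. lra. pose proof (H n). lra. Qed.

Lemma psum_scal c f n : psum (fun i => c * f i) n = c * psum f n.
Proof. induction n; simpl. ring. rewrite IHn. ring. Qed.

Lemma SER f U Lo : (forall m, 0 <= f m) -> (forall N, psum f N <= U) -> (exists N, Lo <= psum f N) ->
  Lo <= Series f <= U.
Proof.
  intros Hf HU [N HN].
  assert (Hg : Un_growing (sum_f_R0 f)).
  { intros n. simpl. pose proof (Hf (S n)). lra. }
  assert (Hb : bound (EUn (sum_f_R0 f))).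
  { exists U. intros y [n Hn]. rewrite Hn. rewrite <- psum_sum. auto. }
  destruct (growing_cv _ Hg Hb) as [l Hl].
  assert (Hs : Series f = l).
  { apply is_series_unique. apply is_series_Reals. exact Hl. }
  rewrite Hs. split.
  - destruct N as [|N].
    + simpl in HN. pose proof (growing_ineq _ l Hg Hl 0). simpl in H. pose proof (Hf 0%nat). lra.
    + rewrite psum_sum in HN. pose proof (growing_ineq _ l Hg Hl N). lra.
  - apply Rnot_lt_le. intros Hlt.
    destruct (Hl (l - U) ltac:(lra)) as [n Hn]. specialize (Hn n (le_n n)).
    unfold Rdist in Hn. rewrite <- psum_sum in Hn. specialize (HU (S n)).
    rewrite Rabs_left1 in Hn; lra.
Qed.

Lemma head_sum alpha k j (p : nat -> R) M : (2 <= j)%nat -> 1 < alpha < 2 ->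
  (forall l : nat, (1 <= l)%nat -> 0 <= p l) ->
  exists C X, 0 <= C /\ forall x, X <= x ->
    (forall m, (m < M)%nat -> 0 <= Rpower x alpha * (p (m + (j - 1))%nat * Tk k j x (m + (j - 1)))) /\
    psum (fun m => Rpower x alpha * (p (m + (j - 1))%nat * Tk k j x (m + (j - 1)))) M <= C * Rpower x (alpha - 2).
Proof.
  intros Hj Ha Hp. induction M as [|M IH].
  - exists 0, 0. split. lra. intros x Hx. split. intros; lia. simpl. lra.
  - destruct IH as [C [X [HC HX]]].
    destruct (head_term alpha k j (M + (j - 1)) Hj ltac:(lia) Ha) as [C' [HC' HT]].
    set (l := (M + (j - 1))%nat).
    assert (Hpl : 0 <= p l) by (apply Hp; unfold l; lia).
    exists (C + p l * C'), (Rmax X (INR k + INR l + 1)). split. nra.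
    intros x Hx.
    assert (HxX : X <= x) by (eapply Rle_trans; [apply Rmax_l | exact Hx]).
    assert (Hx2 : INR k + INR l + 1 <= x) by (eapply Rle_trans; [apply Rmax_r | exact Hx]).
    destruct (HX x HxX) as [H1 H2]. destruct (HT x Hx2) as [T0 T1]. fold l in T0, T1.
    assert (Hrp : 0 < Rpower x alpha) by (unfold Rpower; apply exp_pos).
    assert (Hrp2 : 0 < Rpower x (alpha - 2)) by (unfold Rpower; apply exp_pos).
    split.
    + intros m Hm. destruct (Nat.eq_dec m M) as [->|Hne].
      * fold l. apply Rmult_le_pos. lra. apply Rmult_le_pos; auto.
      * apply H1. lia.
    + simpl. fold l.
      replace (Rpower x alpha * (p l * Tk k j x l)) with (p l * (Rpower x alpha * Tk k j x l)) by ring.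
      assert (p l * (Rpower x alpha * Tk k j x l) <= p l * (C' * Rpower x (alpha - 2))).
      { apply Rmult_le_compat_l; auto. }
      nra.
Qed.

Lemma telescope alpha k j x L0 n : 0 < x -> (1 <= L0)%nat ->
  psum (fun i => RInt (Rj_integrand alpha k j) (INR (L0 + i) / (x + INR (L0 + i)))
                  ((INR (L0 + i) + 1) / (x + (INR (L0 + i) + 1)))) n
  = RInt (Rj_integrand alpha k j) (INR L0 / (x + INR L0)) (INR (L0 + n) / (x + INR (L0 + n))).
Proof.
  intros Hx HL0.
  assert (Hu : forall l, (1 <= l)%nat -> 0 < INR l / (x + INR l) < 1).
  { intros l Hl. assert (1 <= INR l) by (replace 1 with (INR 1) by reflexivity; apply le_INR; lia).
    split. apply Rdiv_lt_0_compat; lra.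
    apply (Rmult_lt_reg_r (x + INR l)). lra. unfold Rdiv. rewrite Rmult_assoc, Rinv_l; lra. }
  induction n as [|n IH].
  - simpl. rewrite Nat.add_0_r. rewrite RInt_point. reflexivity.
  - simpl psum. rewrite IH.
    replace (INR (L0 + n) + 1) with (INR (L0 + S n)) by (rewrite Nat.add_succ_r, S_INR; reflexivity).
    apply (RInt_Chasles (Rj_integrand alpha k j)).
    + apply ex_RInt_continuous. intros z Hz. apply h_cont.
      pose proof (Hu L0 HL0). pose proof (Hu (L0 + n)%nat ltac:(lia)).
      destruct (Rle_dec (INR L0 / (x + INR L0)) (INR (L0 + n) / (x + INR (L0 + n)))).
      rewrite Rmin_left in Hz by lra. rewrite Rmax_right in Hz by lra. lra.
      rewrite Rmin_right in Hz by lra. rewrite Rmax_left in Hz by lra. lra.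
    + apply ex_RInt_continuous. intros z Hz. apply h_cont.
      pose proof (Hu (L0 + S n)%nat ltac:(lia)). pose proof (Hu (L0 + n)%nat ltac:(lia)).
      destruct (Rle_dec (INR (L0 + n) / (x + INR (L0 + n))) (INR (L0 + S n) / (x + INR (L0 + S n)))).
      rewrite Rmin_left in Hz by lra. rewrite Rmax_right in Hz by lra. lra.
      rewrite Rmin_right in Hz by lra. rewrite Rmax_left in Hz by lra. lra.
Qed.

Lemma psum_ext f g n : (forall i, f i = g i) -> psum f n = psum g n.
Proof. intros H. induction n; simpl; auto. rewrite IHn, H. reflexivity. Qed.

Lemma rp_small_neg g t x : g < 0 -> 0 < t -> Rpower t (1 / g) < x -> Rpower x g < t.
Proof.
  intros Hg Ht Hx. set (z := Rpower t (1 / g)) in *.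
  assert (Hz : 0 < z) by (unfold z, Rpower; apply exp_pos).
  assert (Ez : Rpower z g = t).
  { unfold z. rewrite Rpower_mult. replace (1 / g * g) with 1 by (field; lra). apply Rpower_1; auto. }
  assert (E : forall y, Rpower y g = / Rpower y (- g)).
  { intros. rewrite <- Rpower_Ropp. f_equal. ring. }
  rewrite E. rewrite E in Ez.
  assert (Rpower z (- g) < Rpower x (- g)) by (apply Rlt_Rpower_l; lra).
  assert (0 < Rpower z (- g)) by (unfold Rpower; apply exp_pos).
  rewrite <- Ez. apply Rinv_lt_contravar. apply Rmult_lt_0_compat; lra. auto.
Qed.

Lemma rp_alg K n alpha b F p0 I : 0 < K -> 0 < n ->
  Rpower K alpha * n * b * (F / Rpower (K * n) alpha) - p0 * b / Rpower n (alpha - 1) * I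
  = b * Rpower n (1 - alpha) * (F - p0 * I).
Proof.
  intros HK Hn. rewrite <- Rpower_mult_distr by auto.
  assert (E1 : Rpower n (1 - alpha) = n / Rpower n alpha).
  { unfold Rminus. rewrite Rpower_plus, Rpower_Ropp, Rpower_1 by auto. reflexivity. }
  assert (E2 : / Rpower n (alpha - 1) = Rpower n (1 - alpha)).
  { rewrite <- Rpower_Ropp. f_equal. ring. }
  assert (0 < Rpower K alpha) by (unfold Rpower; apply exp_pos).
  assert (0 < Rpower n alpha) by (unfold Rpower; apply exp_pos).
  assert (0 < Rpower n (alpha - 1)) by (unfold Rpower; apply exp_pos).
  unfold Rdiv at 2. rewrite Rmult_assoc with (r2 := / Rpower n (alpha - 1)). rewrite E2, E1.
  field. lra.
Qed.

Theorem lemma5 (b p0 alpha : R) (p : nat -> R) (k j : nat) (c0 : R) :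
  0 < b -> 0 < p0 -> 1 < alpha < 2 ->
  (forall l : nat, (1 <= l)%nat -> 0 <= p l) ->
  is_series (fun m : nat => p (S m)) 1 ->
  is_lim_seq (fun l : nat => p l / (p0 * Rpower (INR l) (- (1 + alpha)))) 1 ->
  (2 <= j)%nat -> (j <= k)%nat -> 0 < c0 ->
  exists I : R,
    is_RInt_gen (Rj_integrand alpha k j) (at_right 0) (at_left 1) I /\
    forall eps : R, 0 < eps ->
      exists K0 : R, forall K n : R, 1 <= K -> K0 <= K -> c0 / 2 <= n ->
        Rabs (RjKn p alpha b k j K n - p0 * b / Rpower n (alpha - 1) * I) < eps.
Proof.
  intros Hb Hp0 Ha Hp Hser Hlim Hj Hjk Hc0.
  destruct (I_exists alpha k j Ha Hj Hjk) as [I HI].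
  exists I. split. { apply (I_gen alpha k j I HI). }
  intros eps Heps.
  set (h := Rj_integrand alpha k j).
  assert (HI0 : 0 <= I).
  { apply Rle_trans with (RInt h (1/2) (1/2)). rewrite RInt_point. right; reflexivity.
    apply (I_upper alpha k j Ha Hj Hjk I HI); lra. }
  set (Cn := Rpower (c0 / 2) (1 - alpha)).
  assert (HCn : 0 < Cn) by (unfold Cn, Rpower; apply exp_pos).
  set (e' := eps / (b * Cn)).
  assert (He' : 0 < e') by (unfold e'; apply Rdiv_lt_0_compat; [lra | apply Rmult_lt_0_compat; lra]).
  set (delta := Rmin (1/2) (e' / (4 * (p0 * I + 1)))).
  assert (Hp0I : 0 <= p0 * I) by nra.
  assert (Hdel : 0 < delta) by (unfold delta; apply Rmin_pos; [lra | apply Rdiv_lt_0_compat; lra]).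
  assert (Hdel1 : delta <= 1/2) by apply Rmin_l.
  assert (Hdel2 : delta * (p0 * I) < e' / 4).
  { apply Rle_lt_trans with (e' / (4 * (p0 * I + 1)) * (p0 * I)).
    apply Rmult_le_compat_r. lra. apply Rmin_r.
    apply (Rmult_lt_reg_r (4 * (p0 * I + 1))). lra.
    replace (e' / (4 * (p0 * I + 1)) * (p0 * I) * (4 * (p0 * I + 1))) with (e' * (p0 * I)) by (field; lra).
    replace (e' / 4 * (4 * (p0 * I + 1))) with (e' * (p0 * I) + e') by (field; lra). lra. }
  set (theta := delta / 13).
  destruct (PT alpha k j p p0 theta Hj Hjk Ha Hp0 Hlim ltac:(unfold theta; lra))
    as [L0 [X0 [HX0 [HL01 [HL0k HPT]]]]].
  replace (13 * theta) with delta in HPT by (unfold theta; field).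
  set (eta := e' / (4 * p0)).
  assert (Heta : 0 < eta) by (unfold eta; apply Rdiv_lt_0_compat; lra).
  destruct (I_approx alpha k j I HI eta Heta) as [d [Hd Hap]].
  set (M0 := (L0 - (j - 1))%nat).
  assert (EM0 : (M0 + (j - 1) = L0)%nat) by (unfold M0; lia).
  destruct (head_sum alpha k j p M0 Hj Ha Hp) as [C [Xh [HC HH]]].
  set (a := INR j - alpha).
  assert (Ha0 : 0 < a).
  { unfold a. assert (2 <= INR j) by (replace 2 with (INR 2) by reflexivity; apply le_INR; lia). lra. }
  set (tau := a * e' / (4 * p0)).
  assert (Htau : 0 < tau) by (unfold tau; apply Rdiv_lt_0_compat; [apply Rmult_lt_0_compat|]; lra).
  set (om := Rpower tau (1 / a)).
  assert (Hom : 0 < om) by (unfold om, Rpower; apply exp_pos).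
  assert (Eom : Rpower om a = tau).
  { unfold om. rewrite Rpower_mult. replace (1 / a * a) with 1 by (field; lra). apply Rpower_1; auto. }
  set (X1 := INR L0 / om + 1).
  set (X2 := Rpower (e' / (4 * (C + 1))) (1 / (alpha - 2)) + 1).
  set (X := Rmax (Rmax X0 Xh) (Rmax X1 (Rmax X2 1))).
  assert (HXX0 : X0 <= X) by (unfold X; eapply Rle_trans; [apply Rmax_l | apply Rmax_l]).
  assert (HXXh : Xh <= X) by (unfold X; eapply Rle_trans; [apply Rmax_r | apply Rmax_l]).
  assert (HXX1 : X1 <= X) by (unfold X; eapply Rle_trans; [apply Rmax_l | apply Rmax_r]).
  assert (HXX2 : X2 <= X).
  { unfold X. eapply Rle_trans; [|apply Rmax_r]. eapply Rle_trans; [|apply Rmax_r]. apply Rmax_l. }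
  assert (HXX3 : 1 <= X).
  { unfold X. eapply Rle_trans; [|apply Rmax_r]. eapply Rle_trans; [|apply Rmax_r]. apply Rmax_r. }
  assert (MAIN : forall x, X <= x ->
    Rabs (Series (fun m => Rpower x alpha * (p (m + (j - 1))%nat * Tk k j x (m + (j - 1)))) - p0 * I)
      <= 3 * e' / 4).
  { intros x Hx.
    assert (Hx0 : 0 < x) by lra.
    set (s := fun m => Rpower x alpha * (p (m + (j - 1))%nat * Tk k j x (m + (j - 1)))).
    set (u := fun l : nat => INR l / (x + INR l)).
    assert (Hu : forall l, (1 <= l)%nat -> 0 < u l < 1).
    { intros l Hl. unfold u. assert (1 <= INR l) by (replace 1 with (INR 1) by reflexivity; apply le_INR; lia).
      split. apply Rdiv_lt_0_compat; lra.
      apply (Rmult_lt_reg_r (x + INR l)). lra. unfold Rdiv. rewrite Rmult_assoc, Rinv_l; lra. }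
    assert (Hu1 : forall l, u (S l) = (INR l + 1) / (x + (INR l + 1))).
    { intros l. unfold u. rewrite S_INR. reflexivity. }
    assert (Humono : forall l, (1 <= l)%nat -> u l <= u (S l)).
    { intros l Hl. rewrite Hu1. unfold u. apply Rge_le, Rminus_ge. apply Rle_ge.
      assert (0 <= INR l) by apply pos_INR.
      replace ((INR l + 1) / (x + (INR l + 1)) - INR l / (x + INR l)) with (x / ((x + INR l) * (x + INR l + 1))) by (field; lra).
      apply Rdiv_le_0_compat. lra. apply Rmult_lt_0_compat; lra. }
    set (J := fun i : nat => RInt h (u (L0 + i)%nat) (u (S (L0 + i)))).
    assert (HJ0 : forall i, 0 <= J i).
    { intros i. unfold J. apply RInt_ge_0. apply Humono; lia.
      apply (h_exRInt alpha k j); [apply Hu; lia | apply Hu; lia].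
      intros z Hz. apply h_nonneg. pose proof (Hu (L0 + i)%nat ltac:(lia)). pose proof (Hu (S (L0 + i)) ltac:(lia)). lra. }
    assert (Htail : forall i, (1 - delta) * (p0 * J i) <= s (M0 + i)%nat <= (1 + delta) * (p0 * J i)).
    { intros i. destruct (HPT x (L0 + i)%nat ltac:(lra) ltac:(lia)) as [rho [Hrho Eq]].
      unfold s. replace (M0 + i + (j - 1))%nat with (L0 + i)%nat by lia.
      rewrite Eq. unfold J. rewrite Hu1. unfold u. fold h.
      rewrite near1_iff in Hrho. pose proof (HJ0 i) as HJ. unfold J in HJ. rewrite Hu1 in HJ. unfold u in HJ. fold h in HJ.
      assert (0 <= p0 * RInt h (INR (L0 + i) / (x + INR (L0 + i))) ((INR (L0 + i) + 1) / (x + (INR (L0 + i) + 1)))) by nra.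
      split; apply Rmult_le_compat_r; lra. }
    destruct (HH x ltac:(lra)) as [Hhead0 Hhead].
    change (forall m, (m < M0)%nat -> 0 <= s m) in Hhead0.
    change (psum s M0 <= C * Rpower x (alpha - 2)) in Hhead.
    assert (Hs0 : forall m, 0 <= s m).
    { intros m. destruct (Nat.lt_ge_cases m M0) as [Hm|Hm]. apply Hhead0; auto.
      replace m with (M0 + (m - M0))%nat by lia. pose proof (Htail (m - M0)%nat). pose proof (HJ0 (m - M0)%nat).
      assert (0 <= p0 * J (m - M0)%nat) by nra. nra. }
    assert (Etel : forall n, psum J n = RInt h (u L0) (u (L0 + n)%nat)).
    { intros n. unfold J, u, h. rewrite <- (telescope alpha k j x L0 n Hx0 HL01).
      apply psum_ext. intros i. rewrite S_INR. reflexivity. }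
    assert (HpsJ : forall n, psum (fun i => s (M0 + i)%nat) n <= (1 + delta) * (p0 * psum J n)).
    { intros n. rewrite <- psum_scal, <- psum_scal. apply psum_le. intros i. apply Htail. }
    assert (HpsJ' : forall n, (1 - delta) * (p0 * psum J n) <= psum (fun i => s (M0 + i)%nat) n).
    { intros n. rewrite <- psum_scal, <- psum_scal. apply psum_le. intros i. apply Htail. }
    set (Gu := Rpower (u L0) a / a).
    assert (HGu : p0 * Gu < e' / 4).
    { unfold Gu. assert (u L0 < om).
      { unfold u. assert (1 <= INR L0) by (replace 1 with (INR 1) by reflexivity; apply le_INR; lia).
        assert (INR L0 / om < x) by (unfold X1 in HXX1; lra).
        apply (Rmult_lt_reg_r (x + INR L0)). lra. unfold Rdiv at 1. rewrite Rmult_assoc, Rinv_l, Rmult_1_r by lra.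
        apply (Rmult_lt_reg_r (/ om)). apply Rinv_0_lt_compat; lra.
        replace (om * (x + INR L0) * / om) with (x + INR L0) by (field; lra). fold (INR L0 / om). lra. }
      assert (Rpower (u L0) a < tau). { rewrite <- Eom. apply Rlt_Rpower_l; auto. pose proof (Hu L0 HL01). lra. }
      apply (Rmult_lt_reg_r (a / p0)). apply Rdiv_lt_0_compat; lra.
      replace (p0 * (Rpower (u L0) a / a) * (a / p0)) with (Rpower (u L0) a) by (field; lra).
      replace (e' / 4 * (a / p0)) with tau by (unfold tau; field; lra). auto. }
    assert (Hhb : C * Rpower x (alpha - 2) < e' / 4).
    { assert (Rpower x (alpha - 2) < e' / (4 * (C + 1))).
      { apply rp_small_neg. lra. apply Rdiv_lt_0_compat; lra. unfold X2 in HXX2. lra. }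
      assert (0 < Rpower x (alpha - 2)) by (unfold Rpower; apply exp_pos).
      apply Rle_lt_trans with ((C + 1) * Rpower x (alpha - 2)). nra.
      apply (Rmult_lt_reg_r (/ (C + 1))). apply Rinv_0_lt_compat; lra.
      replace ((C + 1) * Rpower x (alpha - 2) * / (C + 1)) with (Rpower x (alpha - 2)) by (field; lra).
      replace (e' / 4 * / (C + 1)) with (e' / (4 * (C + 1))) by (field; lra). auto. }
    assert (BND : (1 - delta) * (p0 * (I - eta - Gu)) <= Series s <= C * Rpower x (alpha - 2) + (1 + delta) * (p0 * I)).
    { apply SER; auto.
      - intros N. destruct (Nat.le_gt_cases N M0) as [HN|HN].
        + apply Rle_trans with (psum s M0). apply psum_mono; auto.
          assert (0 <= (1 + delta) * (p0 * I)) by nra. lra.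
        + replace N with (M0 + (N - M0))%nat by lia. rewrite psum_split.
          specialize (HpsJ (N - M0)%nat). rewrite Etel in HpsJ.
          assert (RInt h (u L0) (u (L0 + (N - M0))%nat) <= I).
          { apply (I_upper alpha k j Ha Hj Hjk I HI). split. apply Hu; auto.
            replace (L0 + (N - M0))%nat with (L0 + (N - M0))%nat by reflexivity.
            clear -Humono HL01. induction (N - M0)%nat as [|n IHn]. rewrite Nat.add_0_r; lra.
            rewrite Nat.add_succ_r. eapply Rle_trans. exact IHn. apply Humono. lia.
            apply Hu. lia. }
          assert ((1 + delta) * (p0 * RInt h (u L0) (u (L0 + (N - M0))%nat)) <= (1 + delta) * (p0 * I)).
          { apply Rmult_le_compat_l. lra. apply Rmult_le_compat_l; lra. }
          unfold s in *. lra.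
      - destruct (INR_unbounded (x / d)) as [n0 Hn0].
        exists (M0 + n0)%nat. rewrite psum_split.
        pose proof (psum_nonneg s M0 Hs0). specialize (HpsJ' n0). rewrite Etel in HpsJ'.
        set (w := u (L0 + n0)%nat). set (v := Rmin (u L0) d / 2).
        assert (HuL0 := Hu L0 HL01). assert (Hw := Hu (L0 + n0)%nat ltac:(lia)).
        assert (Hw1 : 1 - d < w).
        { unfold w, u. assert (INR n0 <= INR (L0 + n0)) by (apply le_INR; lia).
          assert (x < d * INR (L0 + n0)).
          { apply (Rmult_lt_reg_r (/ d)). apply Rinv_0_lt_compat; lra.
            replace (d * INR (L0 + n0) * / d) with (INR (L0 + n0)) by (field; lra). fold (x / d). lra. }
          assert (0 <= INR (L0 + n0)) by apply pos_INR.
          apply (Rmult_lt_reg_r (x + INR (L0 + n0))). lra.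
          unfold Rdiv. rewrite Rmult_assoc, Rinv_l by lra. nra. }
        assert (Hv : 0 < v <= u L0 /\ v < d).
        { unfold v. pose proof (Rmin_l (u L0) d). pose proof (Rmin_r (u L0) d).
          assert (0 < Rmin (u L0) d) by (apply Rmin_pos; lra). lra. }
        assert (HwL : u L0 <= w).
        { unfold w. clear -Humono HL01. induction n0 as [|n IHn]. rewrite Nat.add_0_r; lra.
          rewrite Nat.add_succ_r. eapply Rle_trans. exact IHn. apply Humono. lia. }
        fold w in Hw. specialize (Hap v w ltac:(lra) ltac:(lra)).
        assert (Ech : RInt h v w = RInt h v (u L0) + RInt h (u L0) w).
        { symmetry. apply (RInt_Chasles h); apply (h_exRInt alpha k j); lra. }
        destruct (h_RInt_bound alpha k j Ha Hj Hjk v (u L0) ltac:(lra) ltac:(lra)) as [B1 B2].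
        simpl in B2. fold a in B2.
        assert (0 < Rpower v a / a) by (apply Rdiv_lt_0_compat; [unfold Rpower; apply exp_pos | lra]).
        assert (RInt h (u L0) w >= I - eta - Gu).
        { fold h in B1. fold h in B2. rewrite Rabs_lt_between' in Hap. unfold Gu. fold h in Hap. lra. }
        fold w in HpsJ'.
        assert ((1 - delta) * (p0 * (I - eta - Gu)) <= (1 - delta) * (p0 * RInt h (u L0) w)).
        { apply Rmult_le_compat_l. lra. apply Rmult_le_compat_l; lra. }
        unfold s in *. lra. }

    assert (p0 * eta = e' / 4) by (unfold eta; field; lra).
    assert (0 <= Gu) by (unfold Gu; apply Rdiv_le_0_compat; [left; unfold Rpower; apply exp_pos | lra]).
    apply Rabs_le. split.
    - assert ((1 - delta) * (p0 * (I - eta - Gu)) >= p0 * I - delta * (p0 * I) - p0 * eta - p0 * Gu).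
      { assert (delta * (p0 * (eta + Gu)) >= 0). { apply Rle_ge. apply Rmult_le_pos. lra. nra. }
        nra. }
      lra.
    - lra. }
  set (K0 := Rmax 1 (2 * X / c0)).
  exists K0. intros K n HK1 HK0 Hn.
  assert (Hnpos : 0 < n) by lra.
  assert (HKpos : 0 < K) by lra.
  assert (HxX : X <= K * n).
  { assert (2 * X / c0 <= K) by (eapply Rle_trans; [apply Rmax_r | exact HK0]).
    apply Rle_trans with ((2 * X / c0) * (c0 / 2)). right. field. lra.
    apply Rmult_le_compat; try lra. apply Rdiv_le_0_compat; lra. }
  specialize (MAIN (K * n) HxX).
  set (F := Series (fun m => Rpower (K * n) alpha * (p (m + (j - 1))%nat * Tk k j (K * n) (m + (j - 1))))) in *.
  assert (ER : RjKn p alpha b k j K n = Rpower K alpha * n * b * (F / Rpower (K * n) alpha)).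
  { unfold F. rewrite Series_scal_l. assert (0 < Rpower (K * n) alpha) by (unfold Rpower; apply exp_pos).
    unfold RjKn, Tk. field_simplify. reflexivity. lra. }
  rewrite ER, rp_alg by auto.
  assert (HRn : Rpower n (1 - alpha) <= Cn).
  { unfold Cn. assert (E : forall y, Rpower y (1 - alpha) = / Rpower y (alpha - 1)).
    { intros. rewrite <- Rpower_Ropp. f_equal. ring. }
    rewrite !E. apply Rinv_le_contravar. unfold Rpower; apply exp_pos.
    apply Rle_Rpower_l; lra. }
  assert (0 < Rpower n (1 - alpha)) by (unfold Rpower; apply exp_pos).
  rewrite Rabs_mult, Rabs_mult, (Rabs_right b), (Rabs_right (Rpower n (1 - alpha))) by lra.
  apply Rle_lt_trans with (b * Cn * (3 * e' / 4)).
  - apply Rmult_le_compat; try nra. apply Rabs_pos.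
  - replace (b * Cn * (3 * e' / 4)) with (3 / 4 * eps) by (unfold e'; field; lra). lra.
Qed.
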